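(* Let $\mathcal{A}$ be an associative algebra over a commutative unital ring containing $\mathbb{Q}$, and let $D_1,D_2$ be derivations of $\mathcal{A}$ with $D_1D_2-D_2D_1=D_1$. For $n\ge 0$ let $[D_2]_n=D_2(D_2-1)(D_2-2)\cdots(D_2-n+1)$ (with $[D_2]_0=\mathrm{id}_{\mathcal{A}}$, and integers meaning integer multiples of $\mathrm{id}_{\mathcal{A}}$). Then the multiplication on $\mathcal{A}[[\hbar]]$ given for $a,b\in\mathcal{A}$ by $$a\star b=\sum_{n=0}^{\infty}\frac{\hbar^n}{n!}\,D_1^n(a)\,[D_2]_n(b)$$ is associative; thus $D_1\smile D_2$ is an integrable infinitesimal deformation of $\mathcal{A}$ with this integral.
   Context: $(f\smile g)(a,b)=f(a)g(b)$ for linear maps $f,g:\mathcal{A}\to\mathcal{A}$. *)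

(* Defs.v *)
From mathcomp Require Import all_boot all_order all_algebra.
Set Implicit Arguments. Unset Strict Implicit. Unset Printing Implicit Defensive.
Import GRing.Theory.
Local Open Scope ring_scope.

(* The algebra A is modelled as an R-module with an (explicitly given)
   associative bilinear multiplication [mul]; no unit is assumed. *)
Section StarProduct.
Variables (R : comUnitRingType) (A : lmodType R) (mul : A -> A -> A).

Fixpoint falling (D : A -> A) (n : nat) (b : A) : A :=
  match n with
  | 0 => b
  | k.+1 => D (falling D k b) - (falling D k b) *+ k
  end.

Definition star_coef (D1 D2 : A -> A) (n : nat) (a b : A) : A :=
  (n`!%:R)^-1 *: mul (iter n D1 a) (falling D2 n b).

(* formal power series A[[hbar]] as coefficient sequences; the star product
   extended hbar-bilinearly: (f * g)_N = sum_{i+j+n=N} mu_n(f_i, g_j) *)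
Definition star (D1 D2 : A -> A) (f g : nat -> A) : nat -> A :=
  fun N => \sum_(i < N.+1) \sum_(j < N.+1 | (i + j <= N)%N)
             star_coef D1 D2 (N - i - j) (f i) (g j).

Definition is_derivation (D : A -> A) : Prop :=
  forall a b, D (mul a b) = mul (D a) b + mul a (D b).
End StarProduct.

(* Main.v *)
Require Import Defs.
From mathcomp Require Import all_boot all_order all_algebra.
From mathcomp Require Import zify ring.
From Stdlib Require Import FunctionalExtensionality.

Module Sums.
Unset Implicit Arguments.
Import GRing.Theory.
Local Open Scope ring_scope.

Section Sums.
Variable V : zmodType.

Lemma sum_collapse (B v : nat) (F : nat -> V) :
  \sum_(x < B) (if (x == v :> nat) then F x else 0) = if (v < B)%N then F v else 0.
Proof.
case: ltnP => hv.
  rewrite (bigD1 (Ordinal hv)) //= eqxx big1 ?addr0 // => i hi.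
  case: eqP => // e; case/eqP: hi; exact: val_inj.
rewrite big1 // => i _; case: eqP => // e.
by move: (ltn_ord i); rewrite e ltnNge hv.
Qed.

Lemma sum_widen (n m : nat) (F : nat -> V) : (n <= m)%N ->
  (forall i, (n <= i)%N -> F i = 0) -> \sum_(i < n) F i = \sum_(i < m) F i.
Proof.
move=> hnm hF; rewrite (big_ord_widen m F hnm) big_mkcond /=.
apply: eq_bigr => i _; case: ifP => // /negbT; rewrite -leqNgt => /hF ->.
by [].
Qed.

Lemma sum_if (B : nat) (P : bool) (F : 'I_B -> V) :
  (if P then \sum_(i < B) F i else 0) = \sum_(i < B) (if P then F i else 0).
Proof. by case: P => //; rewrite big1. Qed.

Lemma inner_collapse (B N x y : nat) (G : nat -> V) : (N < B)%N ->
  \sum_(z < B) (if (x + y + z == N)%N then G z else 0)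
  = if (x + y <= N)%N then G (N - x - y)%N else 0.
Proof.
move=> hNB.
rewrite (eq_bigr (fun z : 'I_B => if (x + y <= N)%N then
           (if (z == N - (x + y) :> nat)%N then G z else 0) else 0)); last first.
  move=> z _; case: (leqP (x + y) N) => h /=.
    by have -> : (x + y + z == N)%N = (z == N - (x + y) :> nat)%N
      by apply/eqP/eqP; lia.
  by have -> : (x + y + z == N)%N = false by apply/eqP; lia.
case: (leqP (x + y) N) => h.
  rewrite sum_collapse; have -> : (N - (x + y) < B)%N by lia.
  by rewrite subnDA.
by rewrite big1.
Qed.

Definition C3 B N (F : nat -> nat -> nat -> V) :=
  \sum_(x < B) \sum_(y < B) \sum_(z < B)
     (if (x + y + z == N)%N then F x y z else 0).

Lemma C3_tri B N (F : nat -> nat -> nat -> V) : (N < B)%N ->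
  \sum_(i < N.+1) \sum_(j < N.+1 | (i + j <= N)%N) F i j (N - i - j)%N = C3 B N F.
Proof.
move=> hNB; rewrite /C3.
under [RHS]eq_bigr => x _ do under eq_bigr => y _ do rewrite (inner_collapse _ _ _ _ _ hNB).
rewrite -(sum_widen N.+1 B (fun x =>
   \sum_(y < B) (if (x + y <= N)%N then F x y (N - x - y)%N else 0))) //; last first.
  by move=> i hi; rewrite big1 // => y _; rewrite ifN //; lia.
apply: eq_bigr => i _; rewrite big_mkcond /=.
apply: (sum_widen N.+1 B (fun j => if (i + j <= N)%N then F i j (N - i - j)%N else 0)) => // j hj; rewrite ifN //; lia.
Qed.

Lemma sum_sel (B v : nat) (P : bool) (X : V) :
  \sum_(x < B) (if (x == v :> nat) && P then X else 0) = if (v < B)%N && P then X else 0.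
Proof.
rewrite (eq_bigr (fun x : 'I_B => if (x == v :> nat) then (if P then X else 0) else 0)).
  by rewrite (sum_collapse B v (fun _ => if P then X else 0)); case: (v < B)%N; case: P.
by move=> x _; case: (x == v :> nat); case: P.
Qed.

End Sums.

Arguments C3 {V}.
Lemma C3_morph (V W : zmodType) (phi : V -> W) B N F :
  (forall u v, phi (u + v) = phi u + phi v) -> phi 0 = 0 ->
  phi (C3 B N F) = C3 B N (fun x y z => phi (F x y z)).
Proof.
move=> hD h0; rewrite /C3.
rewrite (big_morph phi hD h0); apply: eq_bigr => x _.
rewrite (big_morph phi hD h0); apply: eq_bigr => y _.
rewrite (big_morph phi hD h0); apply: eq_bigr => z _.
by case: ifP.
Qed.


End Sums.

Module Nest.
Unset Implicit Arguments.
Import Sums.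
Import GRing.Theory.
Local Open Scope ring_scope.

Section Nest.
Variable V : zmodType.

Lemma nest_l B N (F : nat -> nat -> nat -> nat -> nat -> V) : (N < B)%N ->
 C3 B N (fun x y z => C3 B x (fun a b c => F a b c y z)) =
 \sum_(a<B)\sum_(b<B)\sum_(y<B)\sum_(c<B)\sum_(z<B)
    (if (a+b+y+c+z == N)%N then F a b c y z else 0).
Proof.
move=> hNB; rewrite /C3.
transitivity (\sum_(x<B)\sum_(y<B)\sum_(z<B)\sum_(a<B)\sum_(b<B)\sum_(c<B)
   (if (x == a+b+c :> nat)%N && (a+b+c+y+z == N)%N then F a b c y z else 0)).
  apply: eq_bigr => x _; apply: eq_bigr => y _; apply: eq_bigr => z _.
  rewrite sum_if; apply: eq_bigr => a _; rewrite sum_if; apply: eq_bigr => b _.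
  rewrite sum_if; apply: eq_bigr => c _.
  have -> : ((x == a+b+c :> nat)%N && (a+b+c+y+z == N)%N) = (x+y+z == N)%N && (a+b+c == x)%N.
    by apply/andP/andP => -[/eqP h1 /eqP h2]; split; apply/eqP; lia.
  by case: (x+y+z == N)%N; case: (a+b+c == x)%N.
rewrite [LHS]exchange_big.
under [LHS]eq_bigr => y _ do rewrite exchange_big.
under [LHS]eq_bigr => y _ do under eq_bigr => z _ do rewrite exchange_big.
under [LHS]eq_bigr => y _ do under eq_bigr => z _ do under eq_bigr => a _ do rewrite exchange_big.
under [LHS]eq_bigr => y _ do under eq_bigr => z _ do under eq_bigr => a _ do
  under eq_bigr => b _ do rewrite exchange_big.
under [LHS]eq_bigr => y _ do under eq_bigr => z _ do under eq_bigr => a _ do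
  under eq_bigr => b _ do under eq_bigr => c _ do rewrite sum_sel.
(* now order y z a b c *)
under [LHS]eq_bigr => y _ do rewrite exchange_big.
rewrite [LHS]exchange_big.
under [LHS]eq_bigr => a _ do under eq_bigr => y _ do rewrite exchange_big.
under [LHS]eq_bigr => a _ do rewrite exchange_big.
under [LHS]eq_bigr => a _ do under eq_bigr => b _ do under eq_bigr => y _ do rewrite exchange_big.
apply: eq_bigr => a _; apply: eq_bigr => b _; apply: eq_bigr => y _.
apply: eq_bigr => c _; apply: eq_bigr => z _.
have -> : ((a + b + c < B)%N && (a + b + c + y + z == N)%N) = (a+b+y+c+z == N)%N.
  by apply/andP/eqP => [[_ /eqP] | h]; [lia| split; [lia| apply/eqP; lia]].
by [].
Qed.

Lemma nest_r B N (F : nat -> nat -> nat -> nat -> nat -> V) : (N < B)%N ->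
 C3 B N (fun x y z => C3 B y (fun a b c => F x a b c z)) =
 \sum_(x<B)\sum_(a<B)\sum_(b<B)\sum_(c<B)\sum_(z<B)
    (if (x+a+b+c+z == N)%N then F x a b c z else 0).
Proof.
move=> hNB; rewrite /C3.
transitivity (\sum_(x<B)\sum_(y<B)\sum_(z<B)\sum_(a<B)\sum_(b<B)\sum_(c<B)
   (if (y == a+b+c :> nat)%N && (x+a+b+c+z == N)%N then F x a b c z else 0)).
  apply: eq_bigr => x _; apply: eq_bigr => y _; apply: eq_bigr => z _.
  rewrite sum_if; apply: eq_bigr => a _; rewrite sum_if; apply: eq_bigr => b _.
  rewrite sum_if; apply: eq_bigr => c _.
  have -> : ((y == a+b+c :> nat)%N && (x+a+b+c+z == N)%N) = (x+y+z == N)%N && (a+b+c == y)%N.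
    by apply/andP/andP => -[/eqP h1 /eqP h2]; split; apply/eqP; lia.
  by case: (x+y+z == N)%N; case: (a+b+c == y)%N.
under [LHS]eq_bigr => x _ do rewrite exchange_big.
under [LHS]eq_bigr => x _ do under eq_bigr => z _ do rewrite exchange_big.
under [LHS]eq_bigr => x _ do under eq_bigr => z _ do under eq_bigr => a _ do rewrite exchange_big.
under [LHS]eq_bigr => x _ do under eq_bigr => z _ do under eq_bigr => a _ do
  under eq_bigr => b _ do rewrite exchange_big.
under [LHS]eq_bigr => x _ do under eq_bigr => z _ do under eq_bigr => a _ do
  under eq_bigr => b _ do under eq_bigr => c _ do rewrite sum_sel.
(* order x z a b c -> x a b c z *)
under [LHS]eq_bigr => x _ do rewrite exchange_big.
under [LHS]eq_bigr => x _ do under eq_bigr => a _ do rewrite exchange_big.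
under [LHS]eq_bigr => x _ do under eq_bigr => a _ do under eq_bigr => b _ do rewrite exchange_big.
apply: eq_bigr => x _; apply: eq_bigr => a _; apply: eq_bigr => b _.
apply: eq_bigr => c _; apply: eq_bigr => z _.
have -> : ((a + b + c < B)%N && (x + a + b + c + z == N)%N) = (x+a+b+c+z == N)%N.
  by apply/andP/eqP => [[_ /eqP] | h]; [lia| split; [lia| apply/eqP; lia]].
by [].
Qed.

Lemma core_box B N s (G1 G2 : nat -> nat -> V) : (N < B)%N ->
  (forall K, (K <= N)%N -> \sum_(c < K.+1) G1 c (K - c)%N = \sum_(c < K.+1) G2 c (K - c)%N) ->
  \sum_(c<B)\sum_(z<B) (if (s+c+z == N)%N then G1 c z else 0) =
  \sum_(c<B)\sum_(z<B) (if (s+c+z == N)%N then G2 c z else 0).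
Proof.
move=> hNB hK.
have E : forall G : nat -> nat -> V,
  \sum_(c<B)\sum_(z<B) (if (s+c+z == N)%N then G c z else 0) =
  if (s <= N)%N then \sum_(c < (N - s).+1) G c (N - s - c)%N else 0.
  move=> G; under eq_bigr => c _ do rewrite (inner_collapse _ B N s c (G c) hNB).
  case: (leqP s N) => hs.
    rewrite -(sum_widen _ (N - s).+1 B (fun c => if (s + c <= N)%N then G c (N - s - c)%N else 0)).
    - by apply: eq_bigr => c _; rewrite ifT //; have := ltn_ord c; lia.
    - lia.
    - by move=> i hi; rewrite ifN //; lia.
  by rewrite big1 // => c _; rewrite ifN //; lia.
by rewrite !E; case: leqP => // hs; apply: hK; lia.
Qed.

End Nest.

End Nest.

Module Alg.
Set Implicit Arguments. Unset Strict Implicit.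
Import GRing.Theory.
Local Open Scope ring_scope.

Section Alg.
Variables (R : comUnitRingType) (A : lmodType R) (mul : A -> A -> A).
Hypothesis hQ : forall n : nat, n.+1%:R \is a @GRing.unit R.
Hypothesis mul_linl : forall b, linear (fun a => mul a b).
Hypothesis mul_linr : forall a, linear (mul a).

Lemma mul0l b : mul 0 b = 0.
Proof.
have := mul_linl b 1 0 0; rewrite scaler0 addr0 scale1r => h.
have := congr1 (fun t => t - mul 0 b) h; rewrite subrr addrK => <-. by [].
Qed.
Lemma mul0r a : mul a 0 = 0.
Proof.
have := mul_linr a 1 0 0; rewrite scaler0 addr0 scale1r => h.
have := congr1 (fun t => t - mul a 0) h; rewrite subrr addrK => <-. by [].
Qed.
Lemma mulDl u v b : mul (u + v) b = mul u b + mul v b.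
Proof. by have := mul_linl b 1 u v; rewrite !scale1r. Qed.
Lemma mulDr a u v : mul a (u + v) = mul a u + mul a v.
Proof. by have := mul_linr a 1 u v; rewrite !scale1r. Qed.
Lemma mulZl k u b : mul (k *: u) b = k *: mul u b.
Proof. by have := mul_linl b k u 0; rewrite !addr0 mul0l addr0. Qed.
Lemma mulZr k a u : mul a (k *: u) = k *: mul a u.
Proof. by have := mul_linr a k u 0; rewrite !addr0 mul0r addr0. Qed.
Lemma mulNl u b : mul (- u) b = - mul u b.
Proof. by rewrite -scaleN1r mulZl scaleN1r. Qed.
Lemma mulNr a u : mul a (- u) = - mul a u.
Proof. by rewrite -scaleN1r mulZr scaleN1r. Qed.
Lemma mulBl u v b : mul (u - v) b = mul u b - mul v b.
Proof. by rewrite mulDl mulNl. Qed.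
Lemma mulBr a u v : mul a (u - v) = mul a u - mul a v.
Proof. by rewrite mulDr mulNr. Qed.
Lemma mul_suml I r P (F : I -> A) b :
  mul (\sum_(i <- r | P i) F i) b = \sum_(i <- r | P i) mul (F i) b.
Proof. exact: (big_morph (fun a => mul a b) (fun u v => mulDl u v b) (mul0l b)). Qed.
Lemma mul_sumr I r P (F : I -> A) a :
  mul a (\sum_(i <- r | P i) F i) = \sum_(i <- r | P i) mul a (F i).
Proof. exact: (big_morph (mul a) (mulDr a) (mul0r a)). Qed.

Fixpoint G (D : A -> A) (s d : R) (n : nat) (x : A) : A :=
  if n is k.+1 then D (G D s d k x) - (s + k%:R * d) *: G D s d k x else x.

Lemma G_iter (D : A -> A) n x : G D 0 0 n x = iter n D x.
Proof. by elim: n => //= n ->; rewrite mulr0 addr0 scale0r subr0. Qed.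

Lemma G_fall (D : A -> A) n x : G D 0 1 n x = falling D n x.
Proof. by elim: n => //= n ->; rewrite mulr1 add0r scaler_nat. Qed.

Lemma G_add (D : {linear A -> A}) s d n x y : G D s d n (x + y) = G D s d n x + G D s d n y.
Proof.
elim: n => //= n ->; rewrite linearD scalerDr opprD.
by rewrite addrACA.
Qed.

Lemma G_scale (D : {linear A -> A}) s d n k x : G D s d n (k *: x) = k *: G D s d n x.
Proof.
elim: n => //= n ->; rewrite linearZ scalerBr; congr (_ - _).
by rewrite !scalerA mulrC.
Qed.

Lemma fact_unit n : (n`!)%:R \is a @GRing.unit R.
Proof. elim: n => [|n IH]; first by rewrite unitr1. by rewrite factS natrM unitrM hQ IH. Qed.

Lemma binom_inv a b :
  ('C(a + b, a))%:R * ((a + b)`!%:R)^-1 = (a`!%:R)^-1 * (b`!%:R)^-1 :> R.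
Proof.
have h := bin_fact (leq_addr b a); rewrite addKn in h.
rewrite -h natrM natrM.
have ua := fact_unit a; have ub := fact_unit b.
have uc : ('C(a + b, a))%:R \is a @GRing.unit R.
  by have := fact_unit (a + b); rewrite -h natrM natrM !unitrM => /andP[].
rewrite !invrM ?unitrM ?ua ?ub //.
by rewrite mulrC divrK // mulrC.
Qed.

End Alg.

End Alg.

Module Alg2.
Set Implicit Arguments. Unset Strict Implicit.
Import Alg.
Import GRing.Theory.
Local Open Scope ring_scope.

Section Alg2.
Variables (R : comUnitRingType) (A : lmodType R) (mul : A -> A -> A).
Hypothesis mul_linl : forall b, linear (fun a => mul a b).
Hypothesis mul_linr : forall a, linear (mul a).

Lemma leib (D : {linear A -> A}) (hD : is_derivation mul D) (s t u d : R) n y w :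
  s + t = u ->
  G D u d n (mul y w) =
  \sum_(j < n.+1) ('C(n, j))%:R *: mul (G D s d j y) (G D t d (n - j) w).
Proof.
move=> hu; elim: n => [|n IH].
  by rewrite big_ord1 /= bin0 scale1r.
pose X (j : nat) := mul (G D s d j y) (G D t d (n.+1 - j) w).
transitivity (\sum_(j < n.+1) ('C(n, j))%:R *:
   (mul (G D s d j.+1 y) (G D t d (n - j) w) + mul (G D s d j y) (G D t d (n - j).+1 w))).
  rewrite /= IH linear_sum scaler_sumr -sumrB; apply: eq_bigr => j _ /=.
  rewrite linearZ hD (mulBl mul_linl) (mulBr mul_linr) (mulZl mul_linl) (mulZr mul_linr).
  have hk : u + n%:R * d = (s + j%:R * d) + (t + (n - j)%:R * d).
    by rewrite -hu natrB; [ring | have := ltn_ord j; lia].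
  rewrite hk scalerA (mulrC _ ('C(n, j))%:R) -scalerA -scalerBr; congr (_ *: _).
  by rewrite scalerDl opprD addrACA.

transitivity (\sum_(j < n.+1) ('C(n, j))%:R *: X j.+1 + \sum_(j < n.+1) ('C(n, j))%:R *: X j).
  rewrite -big_split; apply: eq_bigr => j _; rewrite /X subSS subSn ?scalerDr //.
  by have := ltn_ord j; lia.
have E1 : \sum_(j < n.+1) ('C(n, j))%:R *: X j = \sum_(j < n.+2) ('C(n, j))%:R *: X j.
  by rewrite [RHS]big_ord_recr /= bin_small // mulr0n scale0r addr0.
rewrite E1; transitivity (\sum_(j < n.+2) ('C(n.+1, j))%:R *: X j); last by [].
rewrite [RHS]big_ord_recl [in X in _ + X = _]big_ord_recl !bin0 addrCA; congr (_ + _).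
rewrite -big_split; apply: eq_bigr => j _.
by rewrite lift0 binS natrD scalerDl addrC.
Qed.

End Alg2.

End Alg2.

Module Alg3.
Set Implicit Arguments. Unset Strict Implicit.
Import Sums.
Import Alg.
Import Alg2.
Import GRing.Theory.
Local Open Scope ring_scope.

Lemma tri (V : zmodType) K (F : nat -> nat -> V) :
  \sum_(c < K.+1) \sum_(k < (K - c).+1) F c k =
  \sum_(P < K.+1) \sum_(c < P.+1) F c (P - c)%N.
Proof.
elim: K => [|K IH]; first by rewrite !big_ord1.
rewrite big_ord_recr /= subnn big_ord1.
rewrite [RHS]big_ord_recr /= -IH.
rewrite [X in _ = _ + X]big_ord_recr /= subnn.
rewrite addrA; congr (_ + _).
rewrite -big_split /=; apply: eq_bigr => c _.
have hc := ltn_ord c.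
have hc' : (c <= K)%N by lia.
by rewrite (subSn hc') big_ord_recr.
Qed.

Section Alg3.
Variables (R : comUnitRingType) (A : lmodType R) (mul : A -> A -> A).
Variables (D1 D2 : {linear A -> A}).
Hypothesis hcomm : forall a, D1 (D2 a) - D2 (D1 a) = D1 a.

Lemma comm1 s m x : D1 (G D2 s 1 m x) = G D2 (s - 1) 1 m (D1 x).
Proof.
elim: m => //= m IH.
rewrite linearB linearZ -IH.
move/eqP: (hcomm (G D2 s 1 m x)); rewrite subr_eq => /eqP ->.
rewrite (_ : s - 1 + m%:R * 1 = (s + m%:R * 1) - 1); last by ring.
rewrite scalerBl scale1r opprB.
set X := D1 _; set Y := D2 _.
by rewrite -addrA addrCA.
Qed.

Lemma commL l s m x :
  iter l D1 (G D2 s 1 m x) = G D2 (s - l%:R) 1 m (iter l D1 x).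
Proof.
elim: l s => [|l IH] s; first by rewrite subr0.
rewrite !iterS IH comm1.
by have -> : s - (l.+1)%:R = s - l%:R - 1 by rewrite -addn1 natrD opprD addrA.
Qed.

Lemma splitG s l k x :
  G D2 s 1 (l + k) x = G D2 (s + l%:R) 1 k (G D2 s 1 l x).
Proof.
elim: k => [|k IH]; first by rewrite addn0.
by rewrite addnS /= IH natrD !mulr1 addrA.
Qed.

End Alg3.

End Alg3.

Module Core.
Set Implicit Arguments. Unset Strict Implicit.
Import Sums.
Import Alg.
Import Alg2.
Import Alg3.
Import GRing.Theory.
Local Open Scope ring_scope.

Section Core.
Variables (R : comUnitRingType) (A : lmodType R) (mul : A -> A -> A).
Hypothesis hQ : forall n : nat, n.+1%:R \is a @GRing.unit R.
Hypothesis mul_linl : forall b, linear (fun a => mul a b).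
Hypothesis mul_linr : forall a, linear (mul a).
Hypothesis mulA : forall a b c, mul (mul a b) c = mul a (mul b c).
Variables (D1 D2 : {linear A -> A}).
Hypothesis hD1 : is_derivation mul D1.
Hypothesis hD2 : is_derivation mul D2.
Hypothesis hcomm : forall a, D1 (D2 a) - D2 (D1 a) = D1 a.

Local Notation mu := (star_coef mul D1 D2).

Lemma muE n a b : mu n a b = (n`!%:R)^-1 *: mul (iter n D1 a) (G D2 0 1 n b).
Proof. by rewrite /star_coef G_fall. Qed.

Lemma iterZ n k x : iter n D1 (k *: x) = k *: iter n D1 x.
Proof. by rewrite -!G_iter G_scale. Qed.

Definition Tm K p q r (P c : nat) :=
  ((c`!%:R)^-1 * (((P - c)`!%:R)^-1 * ((K - P)`!%:R)^-1)) *: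
  mul (iter P D1 p)
    (mul (G D2 (- (K - P)%:R) 1 c (iter (K - P) D1 q))
         (G D2 ((K - P)%:R) 1 (P - c) (G D2 0 1 (K - P) r))).

Lemma core_l K p q r :
  \sum_(c < K.+1) mu (K - c) (mu c p q) r =
  \sum_(P < K.+1) \sum_(c < P.+1) Tm K p q r P c.
Proof.
transitivity (\sum_(c < K.+1) \sum_(k < (K - c).+1)
  (((K - c)`!%:R)^-1 * (c`!%:R)^-1 * ('C(K - c, k))%:R) *:
    mul (mul (iter k D1 (iter c D1 p)) (iter (K - c - k) D1 (G D2 0 1 c q)))
        (G D2 0 1 (K - c) r)).
  apply: eq_bigr => c _.
  rewrite !muE iterZ (mulZl mul_linl) scalerA -G_iter.
  rewrite (@leib _ _ _ mul_linl mul_linr D1 hD1 0 0 0 0 _ _ _ (addr0 0)).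
  rewrite (mul_suml mul_linl) scaler_sumr; apply: eq_bigr => k _.
  by rewrite (mulZl mul_linl) scalerA !G_iter.
rewrite (@tri _ K (fun c k => (((K - c)`!%:R)^-1 * (c`!%:R)^-1 * ('C(K - c, k))%:R) *:
    mul (mul (iter k D1 (iter c D1 p)) (iter (K - c - k) D1 (G D2 0 1 c q)))
        (G D2 0 1 (K - c) r))).
apply: eq_bigr => P _; apply: eq_bigr => c _.
have hP := ltn_ord P; have hc := ltn_ord c.
rewrite /Tm -iterD subnK; last by lia.
have -> : (K - c - (P - c) = K - P)%N by lia.
rewrite commL // sub0r.
have -> : (K - c = (K - P) + (P - c))%N by lia.
rewrite splitG add0r mulA; congr (_ *: _).
have hb := binom_inv hQ (P - c) (K - P).
rewrite addnC.
transitivity ((('C((P - c) + (K - P), P - c))%:R * (((P - c) + (K - P))`!%:R)^-1 * (c`!%:R)^-1 : R)).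
  by ring.
rewrite hb; ring.
Qed.

Lemma core_r K p q r :
  \sum_(c < K.+1) mu (K - c) p (mu c q r) =
  \sum_(P < K.+1) \sum_(c < P.+1) Tm K p q r P c.
Proof.
transitivity (\sum_(c < K.+1) \sum_(j < (K - c).+1)
  (((K - c)`!%:R)^-1 * (c`!%:R)^-1 * ('C(K - c, j))%:R) *:
    mul (iter (K - c) D1 p)
      (mul (G D2 (- c%:R) 1 j (iter c D1 q)) (G D2 (c%:R) 1 (K - c - j) (G D2 0 1 c r)))).
  apply: eq_bigr => c _.
  rewrite !muE G_scale (mulZr mul_linr) scalerA.
  rewrite (@leib _ _ _ mul_linl mul_linr D2 hD2 (- c%:R) (c%:R) 0 1 _ _ _ (addNr _)).
  rewrite (mul_sumr mul_linr) scaler_sumr; apply: eq_bigr => j _.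
  by rewrite (mulZr mul_linr) scalerA.
rewrite (reindex_inj rev_ord_inj) /=.
apply: eq_bigr => P _.
have hP := ltn_ord P.
rewrite subSS subKn; last by lia.
apply: eq_bigr => j _.
have hj := ltn_ord j.
rewrite /Tm; congr (_ *: _).
have hb := binom_inv hQ j (P - j).
rewrite subnKC in hb; last by lia.
transitivity ((('C(P, j))%:R * (P`!%:R)^-1 * ((K - P)`!%:R)^-1 : R)).
  by ring.
rewrite hb; ring.
Qed.

End Core.

End Core.

Unset Implicit Arguments.
Import Sums Nest Alg Alg2 Alg3 Core.
Import GRing.Theory.
Local Open Scope ring_scope.

Lemma eq_C3 (V : zmodType) B N (F F' : nat -> nat -> nat -> V) :
  (forall x y z, (x < B)%N -> (y < B)%N -> F x y z = F' x y z) ->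
  C3 B N F = C3 B N F'.
Proof.
move=> h; rewrite /C3; apply: eq_bigr => x _; apply: eq_bigr => y _; apply: eq_bigr => z _.
by rewrite h.
Qed.

Theorem theorem5 (R : comUnitRingType) (A : lmodType R) (mul : A -> A -> A)
  (hQ : forall n : nat, n.+1%:R \is a @GRing.unit R)
  (mul_linl : forall b, linear (fun a => mul a b))
  (mul_linr : forall a, linear (mul a))
  (mulA : forall a b c, mul (mul a b) c = mul a (mul b c))
  (D1 D2 : {linear A -> A})
  (hD1 : is_derivation mul D1) (hD2 : is_derivation mul D2)
  (hcomm : forall a, D1 (D2 a) - D2 (D1 a) = D1 a) :
  (forall a b, star_coef mul D1 D2 0 a b = mul a b) /\
  (forall a b, star_coef mul D1 D2 1 a b = mul (D1 a) (D2 b)) /\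
  (forall f g h : nat -> A,
      star mul D1 D2 (star mul D1 D2 f g) h = star mul D1 D2 f (star mul D1 D2 g h)).
Proof.
pose mu := star_coef mul D1 D2.
have starC : forall (f g : nat -> A) N B, (N < B)%N ->
    star mul D1 D2 f g N = C3 B N (fun x y z => mu z (f x) (g y)).
  by move=> f g N B hNB; rewrite /star -(C3_tri _ B N (fun x y z => mu z (f x) (g y)) hNB).
have G0 : forall (D : {linear A -> A}) s d n, G D s d n 0 = 0.
  by move=> D s d n; have := G_scale D s d n 0 0; rewrite !scale0r.
have addL : forall n b u v, mu n (u + v) b = mu n u b + mu n v b.
  by move=> n b u v; rewrite /mu !muE -!G_iter G_add (Alg.mulDl mul_linl) scalerDr.
have zeroL : forall n b, mu n 0 b = 0.
  by move=> n b; rewrite /mu muE -G_iter G0 (Alg.mul0l mul_linl) scaler0.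
have addR : forall n a u v, mu n a (u + v) = mu n a u + mu n a v.
  by move=> n a u v; rewrite /mu !muE G_add (Alg.mulDr mul_linr) scalerDr.
have zeroR : forall n a, mu n a 0 = 0.
  by move=> n a; rewrite /mu muE G0 (Alg.mul0r mul_linr) scaler0.
split.
  by move=> a b; rewrite /star_coef /= invr1 scale1r.
split.
  by move=> a b; rewrite /star_coef /= mulr0n subr0 invr1 scale1r.
move=> f g h; apply: functional_extensionality => N.
have hNB := ltnSn N.
rewrite (starC _ _ _ _ hNB) [RHS](starC _ _ _ _ hNB).
rewrite (@eq_C3 _ N.+1 N _ (fun x y z => C3 N.+1 x (fun a b c => mu z (mu c (f a) (g b)) (h y)))); last first.
  move=> x y z hx _; rewrite (starC _ _ _ _ hx).
  by apply: (C3_morph _ _ (fun v => mu z v (h y))) => [u v|]; rewrite ?addL ?zeroL.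
rewrite [RHS](@eq_C3 _ N.+1 N _ (fun x y z => C3 N.+1 y (fun a b c => mu z (f x) (mu c (g a) (h b))))); last first.
  move=> x y z _ hy; rewrite (starC _ _ _ _ hy).
  by apply: (C3_morph _ _ (fun v => mu z (f x) v)) => [u v|]; rewrite ?addR ?zeroR.
rewrite (nest_l _ _ _ (fun a b c y z => mu z (mu c (f a) (g b)) (h y)) hNB).
rewrite (nest_r _ _ _ (fun x a b c z => mu z (f x) (mu c (g a) (h b))) hNB).
apply: eq_bigr => a _; apply: eq_bigr => b _; apply: eq_bigr => y _.
apply: (core_box _ _ _ _ (fun c z => mu z (mu c (f a) (g b)) (h y))
                         (fun c z => mu z (f a) (mu c (g b) (h y))) hNB) => K _.
by rewrite (core_l hQ mul_linl mul_linr mulA hD1 hcomm) (core_r hQ mul_linl mul_linr D1 hD2).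
Qed.
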